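(* Let $\sigma\in S_n$ and let $f_\sigma=x_1\cdots x_n-x_{\sigma(1)}\cdots x_{\sigma(n)}$ in the free associative algebra. For $i\in\{1,\dots,n\}$ let $T_i(f_\sigma)=f_\sigma(x_1,\dots,x_{i-1},x_ix_{i+1},x_{i+2},\dots,x_{n+1})$. Then $T_i(f_\sigma)=x_1\cdots x_{n+1}-x_{\tau(1)}\cdots x_{\tau(n+1)}$ where $\tau=\hat s_{i+1}\,\sigma\,\hat s_{\sigma^{-1}(i)+1}^{-1}\in S_{n+1}$, with $\sigma$ regarded as the element of $S_{n+1}$ fixing $n+1$.
   Context: For $1\le m\le n+1$, $\hat s_m\in S_{n+1}$ denotes the cycle $(m,m+1,\ldots,n+1)$ (so $\hat s_{n+1}$ is the identity). Products of permutations are compositions of functions. *)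

(* Defs.v *)
From HB Require Import structures.
From mathcomp Require Import all_boot all_order all_algebra all_fingroup.
From mathcomp Require Import zify.
Set Implicit Arguments. Unset Strict Implicit. Unset Printing Implicit Defensive.
Import GRing.Theory.
Local Open Scope ring_scope.

(* Conventions: indices are 0-based.  The variable x_j (1 <= j <= N) of the paper
   is index j-1 : 'I_N here. *)

(* The cycle  \hat s_m = (m, m+1, ..., n+1)  in S_{n+1}, for 1 <= m <= n+1.
   Here m0 : 'I_n.+1 is the 0-based version m0 = m - 1, so (0-based)
   k |-> k for k < m0,  k |-> k+1 for m0 <= k < n,  n |-> m0. *)
Definition hat_s_fun (n : nat) (m0 : 'I_n.+1) (k : 'I_n.+1) : 'I_n.+1 :=
  if (k < m0)%N then k else if (k < n)%N then inord k.+1 else m0.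

Lemma hat_s_inj (n : nat) (m0 : 'I_n.+1) : injective (hat_s_fun m0).
Proof.
move=> a b; rewrite /hat_s_fun.
have ha := ltn_ord a; have hb := ltn_ord b; have hm := ltn_ord m0.
case: (ltnP a m0) => h1; case: (ltnP b m0) => h2;
case: (ltnP a n) => h3; case: (ltnP b n) => h4 => E; apply/val_inj => //=;
move/(congr1 val): E => /=; rewrite ?inordK //; lia.
Qed.

Definition hat_s (n : nat) (m0 : 'I_n.+1) : 'S_n.+1 := perm (@hat_s_inj n m0).

Definition ext_perm (n : nat) (s : 'S_n) : 'S_n.+1 := lift_perm ord_max ord_max s.

(* The permutation tau = \hat s_{i+1} o sigma o (\hat s_{sigma^{-1}(i)+1})^{-1}
   (composition of functions), for the 1-based index i = i0 + 1.
   \hat s_{i+1} has 0-based parameter i = i0+1 = lift ord0 i0, and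
   \hat s_{sigma^{-1}(i)+1} has 0-based parameter sigma^{-1}(i) (1-based) = s^-1 i0 + 1. *)
Definition tau (n : nat) (s : 'S_n) (i0 : 'I_n) (k : 'I_n.+1) : 'I_n.+1 :=
  hat_s (lift ord0 i0) (ext_perm s (((hat_s (lift ord0 (s^-1 i0)))^-1)%g k)).

Definition f_sigma (A : nzRingType) (n : nat) (s : 'S_n) (y : 'I_n -> A) : A :=
  \prod_(j < n) y j - \prod_(j < n) y (s j).

Definition Ti_args (A : nzRingType) (n : nat) (i0 : 'I_n) (x : 'I_n.+1 -> A)
  (j : 'I_n) : A :=
  if (j < i0)%N then x (widen_ord (leqnSn n) j)
  else if j == i0 then x (widen_ord (leqnSn n) j) * x (lift ord0 j)
  else x (lift ord0 j).

(* Main.v *)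
Require Import Defs.
From HB Require Import structures.
From mathcomp Require Import all_boot all_order all_algebra all_fingroup.
From mathcomp Require Import zify.
Set Implicit Arguments. Unset Strict Implicit. Unset Printing Implicit Defensive.
Import GRing.Theory.
Local Open Scope ring_scope.

Lemma oinj n (a b : 'I_n) : (a : nat) = b -> a = b.
Proof. exact: val_inj. Qed.

Lemma hat_sE n (M k : 'I_n.+1) :
  (hat_s M k : nat) = if (k < M)%N then val k else if (k < n)%N then k.+1 else val M.
Proof.
rewrite /hat_s permE /hat_s_fun; case: ifP => //= _; case: ifP => //= h.
by rewrite inordK.
Qed.

Lemma hat_sV n (M k j : 'I_n.+1) : hat_s M j = k -> ((hat_s M)^-1)%g k = j.
Proof. by move<-; rewrite permK. Qed.

Lemma ext_lt n (s : 'S_n.+1) (k : 'I_n.+2) (h : (k < n.+1)%N) :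
  (ext_perm s k : nat) = s (inord k).
Proof.
have E : k = lift ord_max (inord k : 'I_n.+1).
  by apply: oinj; rewrite /= /bump ?leq0n ?add1n inordK // leqNgt h.
by rewrite {1}E /ext_perm lift_perm_lift /= /bump ?leq0n ?add1n leqNgt ltn_ord.
Qed.

Lemma ext_max n (s : 'S_n) : ext_perm s ord_max = ord_max.
Proof. by rewrite /ext_perm lift_perm_id. Qed.

Lemma Ti_hat (A : nzRingType) n (i0 : 'I_n.+1) (x : 'I_n.+2 -> A) (a : 'I_n.+1) (y : 'I_n.+2) :
  (y : nat) = a -> (a : nat) != i0 -> Ti_args i0 x a = x (hat_s (lift ord0 i0) y).
Proof.
move=> hy ha; have := ltn_ord a; have := ltn_ord i0; rewrite /Ti_args.
case: ifP => h1; last rewrite ifF; last (apply/negbTE; exact: ha);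
  move=> h2 h3; congr x; apply: oinj; rewrite hat_sE /= hy /bump ?leq0n ?add1n;
  repeat case: ifP => ? ; try lia.
Qed.

Lemma ext1 n (y : 'I_n.+2) : ext_perm 1%g y = y.
Proof.
case: (ltnP y n.+1) => h.
  apply: oinj; rewrite ext_lt /= ?perm1 ?permE /= ?inordK //.
have -> : y = ord_max by apply: oinj => /=; have := ltn_ord y; lia.
by rewrite ext_max.
Qed.

Lemma main_prod (A : nzRingType) (n : nat) (s : 'S_n.+1) (i0 : 'I_n.+1)
    (x : 'I_n.+2 -> A) :
  \prod_(j < n.+1) Ti_args i0 x (s j) = \prod_(k < n.+2) x (tau s i0 k).
Proof.
set m := nat_of_ord (s^-1 i0)%g.
have hm : (m < n.+1)%N by apply: ltn_ord.
pose G j := Ti_args i0 x (s (inord j)).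
pose H k := x (tau s i0 (inord k)).
have -> : \prod_(j < n.+1) Ti_args i0 x (s j) = \prod_(0 <= j < n.+1) G j.
  by rewrite big_mkord; apply: eq_bigr => j _; rewrite /G inord_val.
have -> : \prod_(k < n.+2) x (tau s i0 k) = \prod_(0 <= k < n.+2) H k.
  by rewrite big_mkord; apply: eq_bigr => j _; rewrite /H inord_val.
rewrite (@big_cat_nat _ _ _ m 0 n.+1) ?(ltnW hm) //=.
rewrite [in RHS](@big_cat_nat _ _ _ m 0 n.+2) //=; last by lia.
rewrite (@big_ltn _ _ _ m n.+1) // (@big_ltn _ _ _ m n.+2); last by lia.
rewrite (@big_ltn _ _ _ m.+1 n.+2); last by lia.
rewrite (@big_add1 _ _ _ m.+1 n.+2) /=.
have sm : s (inord m) = i0 by rewrite /m inord_val permKV.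
have sne : forall j, (j < n.+1)%N -> j != m -> s (inord j) != i0.
  move=> j hj; apply: contra => /eqP E; apply/eqP.
  have := congr1 val (congr1 (s^-1)%g E); rewrite permK /m => <-.
  exact/esym/inordK.
have e1 : \prod_(0 <= i < m) G i = \prod_(0 <= i < m) H i.
  apply: eq_big_nat => j /andP [_ hj].
  have hjn : (j < n.+1)%N by lia.
  rewrite /G /H /tau (@hat_sV _ (lift ord0 (s^-1 i0)%g) (inord j) (inord j)); last first.
    apply: oinj; rewrite hat_sE /= /bump ?leq0n ?add1n !inordK; (repeat case: ifP => ?); lia.
  apply: Ti_hat; first by rewrite ext_lt inordK //; lia.
  rewrite -/(nat_of_ord _); apply: sne; lia.
have e2 : G m = H m * H m.+1.
  rewrite /G /H /tau (@hat_sV _ (lift ord0 (s^-1 i0)%g) (inord m) (inord m)); last first.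
    apply: oinj; rewrite hat_sE /= /bump ?leq0n ?add1n !inordK; (repeat case: ifP => ?); lia.
  rewrite (@hat_sV _ (lift ord0 (s^-1 i0)%g) (inord m.+1) ord_max); last first.
    apply: oinj; rewrite hat_sE /= /bump ?leq0n ?add1n !inordK; (repeat case: ifP => ?); lia.

  have hi0 := ltn_ord i0.
  rewrite ext_max sm /Ti_args ltnn eqxx; congr (x _ * x _); apply: oinj;
    rewrite hat_sE /= ?ext_lt ?inordK ?sm //= /bump ?leq0n ?add1n; (repeat case: ifP => ?); lia.
have e3 : \prod_(m.+1 <= i < n.+1) G i = \prod_(m.+1 <= i < n.+1) H i.+1.
  apply: eq_big_nat => j /andP [hj1 hj].
  rewrite /G /H /tau (@hat_sV _ (lift ord0 (s^-1 i0)%g) (inord j.+1) (inord j)); last first.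
    apply: oinj; rewrite hat_sE /= /bump ?leq0n ?add1n !inordK; (repeat case: ifP => ?); lia.

  apply: Ti_hat; first by rewrite ext_lt inordK //; lia.
  rewrite -/(nat_of_ord _); apply: sne; lia.
by rewrite e1 e2 e3 !mulrA.
Qed.

Theorem lemma2p6 (A : nzRingType) (n : nat) (s : 'S_n) (i0 : 'I_n)
    (x : 'I_n.+1 -> A) :
  f_sigma s (Ti_args i0 x) =
  \prod_(k < n.+1) x k - \prod_(k < n.+1) x (tau s i0 k).
Proof.
case: n s i0 x => [|n] s i0 x; first by case: i0.
rewrite /f_sigma main_prod; congr (_ - _).
have := main_prod 1%g i0 x.
under eq_bigr do rewrite perm1.
move=> ->; apply: eq_bigr => k _; congr x.
by rewrite /tau ext1 invg1 perm1 permKV.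
Qed.
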